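(* Let $g\in\mathcal{G}_0$ and let $(X,\Sigma,\mu)$ be a probability space. Let $\mathcal{P}$ be a finite measurable partition of $X$ containing a set $E$ with $0<\mu(E)<1$, and let $F\in\Sigma$. Then $$H(g,\mathcal{P})\ge H_F(g,\mathcal{P})-|g'_-(1/2)|-d_{\max},$$ where $g'_-(1/2)$ is the left derivative of $g$ at $1/2$ and $d_{\max}=\sup_{x,y\in[0,1]}|g(x)-g(y)|$.
   Context: $\mathcal{G}_0$ is the set of concave functions $g:[0,1]\to\mathbb{R}$ with $g(0)=\lim_{x\to0^+}g(x)=0$. $H(g,\mathcal{P})=\sum_{A\in\mathcal{P}}g(\mu(A))$. The $g$-entropy of $\mathcal{P}$ restricted to $F$ is $H_F(g,\mathcal{P})=\sum_{B\in\mathcal{P}}g(\mu(B\cap F))$. *)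

(* Defs.v *)
From Stdlib Require Import Reals Lra List.
Open Scope R_scope.

Record sigma_algebra (X : Type) (S : (X -> Prop) -> Prop) : Prop := {
  sa_full  : S (fun _ => True);
  sa_compl : forall A, S A -> S (fun x => ~ A x);
  sa_union : forall A : nat -> X -> Prop,
      (forall n, S (A n)) -> S (fun x => exists n, A n x)
}.

(* (X, S, mu) is a probability space: mu is a countably additive
   probability measure on the sigma-algebra S (mu's values on
   non-measurable sets are irrelevant). *)
Record probability_space (X : Type) (S : (X -> Prop) -> Prop)
    (mu : (X -> Prop) -> R) : Prop := {
  ps_sigma : sigma_algebra X S;
  ps_nonneg : forall A, S A -> 0 <= mu A;
  ps_empty : mu (fun _ => False) = 0;
  ps_total : mu (fun _ => True) = 1;
  ps_countably_additive : forall A : nat -> X -> Prop,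
      (forall n, S (A n)) ->
      (forall n m x, n <> m -> A n x -> A m x -> False) ->
      Un_cv (fun N => sum_f_R0 (fun n => mu (A n)) N)
            (mu (fun x => exists n, A n x))
}.

Definition finite_measurable_partition (X : Type) (S : (X -> Prop) -> Prop)
    (P : list (X -> Prop)) : Prop :=
  (forall A, In A P -> S A) /\
  (forall i j (d : X -> Prop) x, i <> j -> i < length P -> j < length P ->
       nth i P d x -> nth j P d x -> False)%nat /\
  (forall x, exists A, In A P /\ A x).

Definition concave_on_01 (g : R -> R) : Prop :=
  forall x y t, 0 <= x <= 1 -> 0 <= y <= 1 -> 0 <= t <= 1 ->
    t * g x + (1 - t) * g y <= g (t * x + (1 - t) * y).

Definition in_G0 (g : R -> R) : Prop :=
  concave_on_01 g /\ g 0 = 0 /\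
  (forall eps, 0 < eps -> exists delta, 0 < delta /\
      forall x, 0 < x <= 1 -> x < delta -> Rabs (g x) < eps).

Definition is_left_derivative (g : R -> R) (a L : R) : Prop :=
  forall eps, 0 < eps -> exists delta, 0 < delta /\
    forall h, 0 < h < delta -> Rabs ((g a - g (a - h)) / h - L) < eps.

Definition is_dmax (g : R -> R) (d : R) : Prop :=
  is_lub (fun r => exists x y, 0 <= x <= 1 /\ 0 <= y <= 1 /\
                               r = Rabs (g x - g y)) d.

Definition gH {X : Type} (g : R -> R) (mu : (X -> Prop) -> R)
    (P : list (X -> Prop)) : R :=
  fold_right Rplus 0 (map (fun A => g (mu A)) P).

Definition gH_restr {X : Type} (g : R -> R) (mu : (X -> Prop) -> R)
    (F : X -> Prop) (P : list (X -> Prop)) : R :=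
  fold_right Rplus 0 (map (fun B => g (mu (fun x => B x /\ F x))) P).

(* Main.v *)
Require Import Defs.
From Stdlib Require Import Reals Lra List Lia Classical FunctionalExtensionality PropExtensionality.
Import ListNotations.
Open Scope R_scope.

Lemma pext {X : Type} (A B : X -> Prop) : (forall x, A x <-> B x) -> A = B.
Proof. intros H; apply functional_extensionality; intro x; apply propositional_extensionality; auto. Qed.

Lemma sum_nth (l : list R) : forall N, (length l <= S N)%nat ->
  sum_f_R0 (fun n => nth n l 0) N = fold_right Rplus 0 l.
Proof.
  induction l as [|a l IH]; intros N HN.
  - simpl. induction N as [|N IHN]; simpl; [reflexivity|].
    simpl in IHN. rewrite IHN by lia. lra.
  - destruct N as [|N].
    + simpl in HN. destruct l; simpl in HN; [|lia]. simpl; lra.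
    + rewrite decomp_sum by lia. simpl pred. simpl fold_right.
      f_equal. apply IH. simpl in HN; lia.
Qed.

Lemma list_bound {T : Type} (l : list T) (a t : T -> R) (K d : R) :
  0 <= K -> 0 <= d ->
  (forall B, In B l -> 0 <= a B) ->
  (forall B, In B l -> t B >= - d) ->
  (forall B, In B l -> a B <= 1/2 -> t B >= - K * a B) ->
  fold_right Rplus 0 (map a l) <= 1 ->
  fold_right Rplus 0 (map t l) >= - K * fold_right Rplus 0 (map a l) - d /\
  (fold_right Rplus 0 (map a l) <= 1/2 ->
   fold_right Rplus 0 (map t l) >= - K * fold_right Rplus 0 (map a l)).
Proof.
  intros HK Hd; induction l as [|B l IH]; intros Ha Ht Hk Hs.
  - simpl. split; intros; lra.
  - simpl in *.
    assert (Hs0 : 0 <= fold_right Rplus 0 (map a l)).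
    { clear -Ha. induction l as [|C l IHl]; simpl; [lra|].
      assert (0 <= a C) by (apply Ha; simpl; auto).
      assert (0 <= fold_right Rplus 0 (map a l)).
      { apply IHl. intros D [HD|HD]; apply Ha; simpl; auto. }
      lra. }
    assert (HaB : 0 <= a B) by auto.
    destruct IH as [IH1 IH2]; auto; try lra.
    assert (HtB : t B >= - d) by auto.
    destruct (Rle_lt_dec (a B) (1/2)) as [Hle|Hgt].
    + assert (t B >= - K * a B) by auto.
      split; [nra|]. intros; specialize (IH2 ltac:(lra)); nra.
    + specialize (IH2 ltac:(lra)). split; [nra|]. intros; lra.
Qed.

Lemma S_empty X S : sigma_algebra X S -> S (fun _ => False).
Proof.
  intros H. pose proof (sa_compl _ _ H _ (sa_full _ _ H)) as H1.
  replace (fun _ : X => False) with (fun x : X => ~ True); auto.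
  apply pext; tauto.
Qed.

Lemma S_seq X S (l : list (X -> Prop)) : sigma_algebra X S ->
  (forall A, In A l -> S A) -> forall n, S (nth n l (fun _ => False)).
Proof.
  intros H Hl n. destruct (Nat.lt_ge_cases n (length l)).
  - apply Hl, nth_In; auto.
  - rewrite nth_overflow by auto. apply S_empty; auto.
Qed.

Lemma S_union2 X S A B : sigma_algebra X S -> S A -> S B -> S (fun x => A x \/ B x).
Proof.
  intros H HA HB.
  assert (Hl : forall C, In C [A; B] -> S C) by (intros C [<-|[<-|[]]]; auto).
  pose proof (sa_union _ _ H _ (S_seq X S _ H Hl)) as HU.
  replace (fun x => A x \/ B x) with (fun x => exists n, nth n [A; B] (fun _ => False) x); auto.
  apply pext; intros x; split.
  - intros [n Hn]. destruct n as [|[|n]]; simpl in Hn; auto. destruct n; contradiction.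
  - intros [Hx|Hx]; [exists 0%nat|exists 1%nat]; exact Hx.
Qed.

Lemma S_inter X S A B : sigma_algebra X S -> S A -> S B -> S (fun x => A x /\ B x).
Proof.
  intros H HA HB.
  pose proof (sa_compl _ _ H _ (S_union2 X S _ _ H (sa_compl _ _ H _ HA) (sa_compl _ _ H _ HB))) as H1.
  replace (fun x => A x /\ B x) with (fun x => ~ (~ A x \/ ~ B x)); auto.
  apply pext; intros x; split; [intros Hn; split; apply NNPP; tauto | tauto].
Qed.

Lemma fin_add X S mu (l : list (X -> Prop)) : probability_space X S mu ->
  (forall A, In A l -> S A) ->
  (forall i j x, i <> j -> (i < length l)%nat -> (j < length l)%nat ->
      nth i l (fun _ => False) x -> nth j l (fun _ => False) x -> False) ->
  fold_right Rplus 0 (map mu l) = mu (fun x => exists n, nth n l (fun _ => False) x).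
Proof.
  intros Hp Hl Hd.
  pose proof (ps_sigma _ _ _ Hp) as Hs.
  assert (Hc := ps_countably_additive _ _ _ Hp (fun n => nth n l (fun _ => False))
                  (S_seq X S l Hs Hl)).
  assert (Hcv : Un_cv (fun N => sum_f_R0 (fun n => mu (nth n l (fun _ => False))) N)
                      (fold_right Rplus 0 (map mu l))).
  { intros eps Heps. exists (length l). intros n Hn.
    replace (sum_f_R0 (fun n => mu (nth n l (fun _ => False))) n)
      with (sum_f_R0 (fun k => nth k (map mu l) 0) n).
    - rewrite sum_nth by (rewrite length_map; lia). unfold Rdist, R_dist.
      rewrite Rminus_diag, Rabs_R0; lra.
    - apply sum_eq; intros k _. rewrite <- (ps_empty _ _ _ Hp). apply map_nth. }
  apply (UL_sequence _ _ _ Hcv). apply Hc.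
  intros n m x Hnm Hn Hm.
  destruct (Nat.lt_ge_cases n (length l)); [|rewrite nth_overflow in Hn by auto; contradiction].
  destruct (Nat.lt_ge_cases m (length l)); [|rewrite nth_overflow in Hm by auto; contradiction].
  eapply Hd; eauto.
Qed.

Lemma mu_mono X S mu A B : probability_space X S mu -> S A -> S B ->
  (forall x, A x -> B x) -> mu A <= mu B.
Proof.
  intros Hp HA HB Hsub. pose proof (ps_sigma _ _ _ Hp) as Hs.
  assert (HB' : S (fun x => B x /\ ~ A x)) by (apply S_inter; auto; apply sa_compl; auto).
  pose proof (fin_add X S mu [A; fun x => B x /\ ~ A x] Hp) as Hf.
  assert (H0 : 0 <= mu (fun x => B x /\ ~ A x)) by (apply (ps_nonneg _ _ _ Hp); auto).
  replace (fun x => exists n, nth n [A; fun x => B x /\ ~ A x] (fun _ => False) x) with B in Hf.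
  - simpl in Hf. rewrite <- Hf.
    + lra.
    + intros C [<-|[<-|[]]]; auto.
    + intros i j x Hij Hi Hj Hx1 Hx2. simpl in Hi, Hj.
      destruct i as [|[|i]]; destruct j as [|[|j]]; try lia; simpl in *; tauto.
  - apply pext; intros x; split.
    + intros Hx. destruct (classic (A x)).
      * exists 0%nat; auto.
      * exists 1%nat; simpl; auto.
    + intros [n Hn]. destruct n as [|[|n]]; simpl in Hn; auto; [tauto|]. destruct n; contradiction.
Qed.

Lemma chord g a b c : concave_on_01 g -> 0 <= a -> a < b -> b < c -> c <= 1 ->
  (c - a) * g b >= (c - b) * g a + (b - a) * g c.
Proof.
  intros Hc Ha Hab Hbc Hc1.
  set (t := (c - b) / (c - a)).
  assert (Ht : 0 <= t <= 1).
  { unfold t; split. unfold Rdiv; apply Rmult_le_pos; [lra|]; left; apply Rinv_0_lt_compat; lra.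
    apply Rmult_le_reg_r with (c - a); [lra|]. unfold Rdiv; rewrite Rmult_assoc, Rinv_l by lra. lra. }
  pose proof (Hc a c t ltac:(lra) ltac:(lra) Ht) as H.
  replace (t * a + (1 - t) * c) with b in H by (unfold t; field; lra).
  assert (E1 : (c - a) * t = c - b) by (unfold t; field; lra).
  assert (E2 : (c - a) * (1 - t) = b - a) by (unfold t; field; lra).
  assert (Hca : 0 < c - a) by lra.
  apply Rle_ge. rewrite <- E1, <- E2.
  replace ((c - a) * t * g a + (c - a) * (1 - t) * g c) with ((c - a) * (t * g a + (1 - t) * g c)) by ring.
  apply Rmult_le_compat_l; lra.
Qed.

Lemma slope g L x y : concave_on_01 g -> is_left_derivative g (1/2) L ->
  0 <= y -> y <= x -> x <= 1/2 -> g x - g y >= - Rabs L * (x - y).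
Proof.
  intros Hc HL Hy Hyx Hx.
  destruct (Rle_lt_or_eq_dec y x Hyx) as [Hlt|Heq]; [|subst; lra].
  assert (Hm : g x - g y >= L * (x - y)).
  { apply Rnot_lt_ge; intro Hcon.
    set (eps := (L * (x - y) - (g x - g y)) / (x - y)).
    assert (Heps : 0 < eps) by (unfold eps; apply Rdiv_lt_0_compat; lra).
    destruct (HL eps Heps) as [delta [Hdel Hh]].
    set (h := Rmin (delta / 2) (1/2 - y)).
    assert (Hh0 : 0 < h) by (unfold h; apply Rmin_glb_lt; lra).
    assert (Hh1 : h <= 1/2 - y) by apply Rmin_r.
    assert (Hh2 : h < delta) by (unfold h; pose proof (Rmin_l (delta/2) (1/2 - y)); lra).
    specialize (Hh h (conj Hh0 Hh2)).
    set (Q := (g (1/2) - g (1/2 - h)) / h) in Hh.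
    assert (HQ : Q * h = g (1/2) - g (1/2 - h)) by (unfold Q; field; lra).
    assert (HQ2 : Q > L - eps) by (apply Rabs_def2 in Hh; lra).
    (* chord monotonicity *)
    assert (S1 : (g x - g y) * (1/2 - y) >= (g (1/2) - g y) * (x - y)).
    { destruct (Rle_lt_or_eq_dec x (1/2) Hx) as [Hx2|Hx2]; [|subst; lra].
      pose proof (chord g y x (1/2) Hc Hy Hlt Hx2 ltac:(lra)). nra. }
    assert (S2 : (g (1/2) - g y) * h >= (g (1/2) - g (1/2 - h)) * (1/2 - y)).
    { destruct (Rle_lt_or_eq_dec h (1/2 - y) Hh1) as [H2|H2].
      - pose proof (chord g y (1/2 - h) (1/2) Hc Hy ltac:(lra) ltac:(lra) ltac:(lra)). nra.
      - rewrite H2. replace (1/2 - (1/2 - y)) with y by ring. lra. }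
    assert (S3 : (g x - g y) * h >= Q * h * (x - y)).
    { rewrite HQ. apply Rle_ge; apply Rmult_le_reg_l with (1/2 - y); [lra|]; apply Rge_le.
      assert ((g x - g y) * (1/2 - y) * h >= (g (1/2) - g y) * (x - y) * h) by
        (apply Rmult_ge_compat_r; lra).
      assert ((g (1/2) - g y) * h * (x - y) >= (g (1/2) - g (1/2 - h)) * (1/2 - y) * (x - y)) by
        (apply Rmult_ge_compat_r; lra).
      nra. }
    assert (S4 : g x - g y >= Q * (x - y)).
    { apply Rle_ge; apply Rmult_le_reg_l with h; [lra|]; apply Rge_le. nra. }
    assert (E : eps * (x - y) = L * (x - y) - (g x - g y)) by (unfold eps; field; lra).
    assert (Q * (x - y) > (L - eps) * (x - y)) by (apply Rmult_gt_compat_r; lra).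
    nra. }
  assert (- Rabs L <= L) by (pose proof (Rle_abs (- L)); rewrite Rabs_Ropp in *; lra).
  nra.
Qed.

Lemma diff_sum {T : Type} (f h : T -> R) (l : list T) :
  fold_right Rplus 0 (map f l) - fold_right Rplus 0 (map h l) =
  fold_right Rplus 0 (map (fun B => f B - h B) l).
Proof. induction l; simpl; lra. Qed.

Theorem mainTheorem18 (g : R -> R) (X : Type) (S : (X -> Prop) -> Prop)
    (mu : (X -> Prop) -> R) (P : list (X -> Prop)) (E F : X -> Prop)
    (gL d : R) :
  in_G0 g ->
  probability_space X S mu ->
  finite_measurable_partition X S P ->
  In E P -> 0 < mu E < 1 ->
  S F ->
  is_left_derivative g (1/2) gL ->
  is_dmax g d ->
  gH g mu P >= gH_restr g mu F P - Rabs gL - d.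
Proof.
  intros [Hc [Hg0 _]] Hp [Hmeas [Hdisj _]] _ _ HF HL [Hub _].
  pose proof (ps_sigma _ _ _ Hp) as Hs.
  assert (Hdd : forall x y, 0 <= x <= 1 -> 0 <= y <= 1 -> Rabs (g x - g y) <= d).
  { intros x y Hx Hy. apply Hub. exists x, y; auto. }
  assert (Hd0 : 0 <= d) by (pose proof (Hdd 0 0 ltac:(lra) ltac:(lra)); pose proof (Rabs_pos (g 0 - g 0)); lra).
  assert (Hrng : forall B, In B P ->
     0 <= mu (fun x => B x /\ F x) /\ mu (fun x => B x /\ F x) <= mu B /\ mu B <= 1).
  { intros B HB. assert (HSB := Hmeas B HB).
    assert (HSBF : S (fun x => B x /\ F x)) by (apply S_inter; auto).
    split; [apply (ps_nonneg _ _ _ Hp); auto|]. split.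
    - apply (mu_mono X S); auto. tauto.
    - rewrite <- (ps_total _ _ _ Hp). apply (mu_mono X S); auto. apply sa_full; auto. }
  assert (Hsum : fold_right Rplus 0 (map mu P) <= 1).
  { rewrite (fin_add X S mu P Hp Hmeas).
    - rewrite <- (ps_total _ _ _ Hp). apply (mu_mono X S); auto.
      + apply sa_union; auto. apply S_seq; auto.
      + apply sa_full; auto.
    - intros i j x; apply Hdisj. }
  assert (HK : 0 <= Rabs gL) by apply Rabs_pos.
  destruct (list_bound P mu (fun B => g (mu B) - g (mu (fun x => B x /\ F x))) (Rabs gL) d
     HK Hd0) as [H1 _]; auto.
  - intros B HB; destruct (Hrng B HB); lra.
  - intros B HB; destruct (Hrng B HB) as [? [? ?]].
    pose proof (Hdd (mu B) (mu (fun x => B x /\ F x)) ltac:(lra) ltac:(lra)) as Hq.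
    pose proof (Rle_abs (- (g (mu B) - g (mu (fun x => B x /\ F x))))); rewrite Rabs_Ropp in *; lra.
  - intros B HB Hle; destruct (Hrng B HB) as [? [? ?]].
    pose proof (slope g gL (mu B) (mu (fun x => B x /\ F x)) Hc HL ltac:(lra) ltac:(lra) Hle).
    assert (0 <= Rabs gL * mu (fun x => B x /\ F x)) by (apply Rmult_le_pos; auto).
    nra.
  - unfold gH, gH_restr. rewrite <- diff_sum in H1.
    assert (Rabs gL * fold_right Rplus 0 (map mu P) <= Rabs gL) by nra.
    lra.
Qed.
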